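(* Let $\mathbb K=(K,\Delta,\varepsilon)$ be a comonad on a well-powered model category $\mathcal M$ whose model structure is injective (its cofibrations are exactly the monomorphisms). Then axioms (K0)–(K3) hold for $\mathbb K$ if and only if $K$ preserves monomorphisms.
   Context: $\mathcal M_{\mathbb K}$ is the category of $\mathbb K$-coalgebras $(D,\delta)$ with $\delta:D\to KD$ satisfying $K\delta\circ\delta=\Delta_D\circ\delta$ and $\varepsilon_D\circ\delta=\mathrm{Id}_D$; $U_{\mathbb K}$ is the forgetful functor and $F_{\mathbb K}X=(KX,\Delta_X)$ its right adjoint. A category is well-powered if the subobjects of each object form a set. Axioms, with $\mathsf{Cof}$ the cofibrations of $\mathcal M$: (K0) $\mathcal M_{\mathbb K}$ is complete; (K1) $\delta\in\mathsf{Cof}$ for every $\mathbb K$-coalgebra $(D,\delta)$; (K2) $K$ preserves cofibrations; (K3) for every morphism $i:(C,\gamma)\to F_{\mathbb K}X$ with $U_{\mathbb K}i\in\mathsf{Cof}$ and every morphism $g:(C,\gamma)\to(D,\delta)$ in $\mathcal M_{\mathbb K}$, the induced morphism $(i,g):(C,\gamma)\to F_{\mathbb K}X\times(D,\delta)$ satisfies $U_{\mathbb K}(i,g)\in\mathsf{Cof}$, if the product exists. *)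

(* Defs.v *)
From Stdlib Require Import ProofIrrelevance.

Set Implicit Arguments.

Record Category := {
  ob :> Type;
  hom : ob -> ob -> Type;
  idm : forall X, hom X X;
  comp : forall X Y Z, hom Y Z -> hom X Y -> hom X Z;
  comp_idl : forall X Y (f : hom X Y), comp (idm Y) f = f;
  comp_idr : forall X Y (f : hom X Y), comp f (idm X) = f;
  comp_assoc : forall X Y Z W (h : hom Z W) (g : hom Y Z) (f : hom X Y),
      comp h (comp g f) = comp (comp h g) f
}.
Arguments hom {C} : rename.
Arguments idm {C} X : rename.
Arguments comp {C X Y Z} : rename.

Record SmallCat := {
  sob : Set;
  shom : sob -> sob -> Set;
  sidm : forall X, shom X X;
  scomp : forall X Y Z, shom Y Z -> shom X Y -> shom X Z;
  scomp_idl : forall X Y (f : shom X Y), scomp (sidm Y) f = f;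
  scomp_idr : forall X Y (f : shom X Y), scomp f (sidm X) = f;
  scomp_assoc : forall X Y Z W (h : shom Z W) (g : shom Y Z) (f : shom X Y),
      scomp h (scomp g f) = scomp (scomp h g) f
}.

Definition SmallCat_cat (J : SmallCat) : Category :=
  {| ob := sob J; hom := @shom J; idm := @sidm J; comp := @scomp J;
     comp_idl := @scomp_idl J; comp_idr := @scomp_idr J;
     comp_assoc := @scomp_assoc J |}.

Record Functor (C D : Category) := {
  fob :> ob C -> ob D;
  fmap : forall X Y, hom X Y -> hom (fob X) (fob Y);
  fmap_id : forall X, fmap X X (idm X) = idm (fob X);
  fmap_comp : forall X Y Z (g : hom Y Z) (f : hom X Y),
      fmap X Z (comp g f) = comp (fmap Y Z g) (fmap X Y f)
}.
Arguments fmap {C D} F {X Y} : rename.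

Section CatNotions.
Variable C : Category.

Definition mono {X Y : C} (f : hom X Y) : Prop :=
  forall W (g h : hom W X), comp f g = comp f h -> g = h.

Definition iso {X Y : C} (f : hom X Y) : Prop :=
  exists g : hom Y X, comp g f = idm X /\ comp f g = idm Y.

(** Well-powered: the subobjects of every object form a (small) set, i.e.
    there is a Set-indexed family of monomorphisms into X such that every
    monomorphism into X is isomorphic (over X) to one of them. *)
Definition well_powered : Prop :=
  forall X : C, exists (I : Set) (S : I -> ob C) (m : forall i, hom (S i) X),
    (forall i, mono (m i)) /\
    (forall (Y : C) (f : hom Y X), mono f ->
       exists i (u : hom Y (S i)), iso u /\ comp (m i) u = f).

Definition is_product (A B P : C) (p1 : hom P A) (p2 : hom P B) : Prop :=
  forall (Z : C) (f : hom Z A) (g : hom Z B),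
    exists h : hom Z P, (comp p1 h = f /\ comp p2 h = g) /\
      forall h' : hom Z P, comp p1 h' = f -> comp p2 h' = g -> h' = h.

Definition is_cone (J : SmallCat) (D : Functor (SmallCat_cat J) C)
  (L : C) (l : forall j, hom L (D j)) : Prop :=
  forall (j k : sob J) (u : shom J j k), comp (fmap D u) (l j) = l k.

Definition is_limit (J : SmallCat) (D : Functor (SmallCat_cat J) C)
  (L : C) (l : forall j, hom L (D j)) : Prop :=
  is_cone D L l /\
  forall (M : C) (m : forall j, hom M (D j)), is_cone D M m ->
    exists h : hom M L, (forall j, comp (l j) h = m j) /\
      forall h' : hom M L, (forall j, comp (l j) h' = m j) -> h' = h.

Definition is_cocone (J : SmallCat) (D : Functor (SmallCat_cat J) C)
  (L : C) (l : forall j, hom (D j) L) : Prop :=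
  forall (j k : sob J) (u : shom J j k), comp (l k) (fmap D u) = l j.

Definition is_colimit (J : SmallCat) (D : Functor (SmallCat_cat J) C)
  (L : C) (l : forall j, hom (D j) L) : Prop :=
  is_cocone D L l /\
  forall (M : C) (m : forall j, hom (D j) M), is_cocone D M m ->
    exists h : hom L M, (forall j, comp h (l j) = m j) /\
      forall h' : hom L M, (forall j, comp h' (l j) = m j) -> h' = h.

Definition complete : Prop :=
  forall (J : SmallCat) (D : Functor (SmallCat_cat J) C),
    exists (L : C) (l : forall j, hom L (D j)), is_limit D L l.

Definition cocomplete : Prop :=
  forall (J : SmallCat) (D : Functor (SmallCat_cat J) C),
    exists (L : C) (l : forall j, hom (D j) L), is_colimit D L l.

Definition retract_of {A B X Y : C} (f : hom A B) (g : hom X Y) : Prop :=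
  exists (i : hom A X) (r : hom X A) (j : hom B Y) (s : hom Y B),
    comp r i = idm A /\ comp s j = idm B /\
    comp g i = comp j f /\ comp f r = comp s g.

Definition has_llp {A B X Y : C} (i : hom A B) (p : hom X Y) : Prop :=
  forall (u : hom A X) (v : hom B Y), comp p u = comp v i ->
    exists h : hom B X, comp h i = u /\ comp p h = v.

End CatNotions.

Arguments mono {C X Y}.
Arguments iso {C X Y}.
Arguments is_product {C}.
Arguments retract_of {C A B X Y}.
Arguments has_llp {C A B X Y}.

Definition morclass (C : Category) := forall X Y : C, hom X Y -> Prop.

Record ModelStructure (C : Category) := {
  W : morclass C;
  Cof : morclass C;
  Fib : morclass C;
  ms_complete : complete C;
  ms_cocomplete : cocomplete C;
  W_2of3_comp : forall X Y Z (f : hom X Y) (g : hom Y Z),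
      W _ _ f -> W _ _ g -> W _ _ (comp g f);
  W_2of3_left : forall X Y Z (f : hom X Y) (g : hom Y Z),
      W _ _ (comp g f) -> W _ _ g -> W _ _ f;
  W_2of3_right : forall X Y Z (f : hom X Y) (g : hom Y Z),
      W _ _ (comp g f) -> W _ _ f -> W _ _ g;
  W_retract : forall A B X Y (f : hom A B) (g : hom X Y),
      retract_of f g -> W _ _ g -> W _ _ f;
  Cof_retract : forall A B X Y (f : hom A B) (g : hom X Y),
      retract_of f g -> Cof _ _ g -> Cof _ _ f;
  Fib_retract : forall A B X Y (f : hom A B) (g : hom X Y),
      retract_of f g -> Fib _ _ g -> Fib _ _ f;
  lift_acyclic_cof : forall A B X Y (i : hom A B) (p : hom X Y),
      Cof _ _ i -> W _ _ i -> Fib _ _ p -> has_llp i p;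
  lift_acyclic_fib : forall A B X Y (i : hom A B) (p : hom X Y),
      Cof _ _ i -> Fib _ _ p -> W _ _ p -> has_llp i p;
  fact_acof_fib : forall X Y (f : hom X Y),
      exists Z (i : hom X Z) (p : hom Z Y),
        Cof _ _ i /\ W _ _ i /\ Fib _ _ p /\ comp p i = f;
  fact_cof_afib : forall X Y (f : hom X Y),
      exists Z (i : hom X Z) (p : hom Z Y),
        Cof _ _ i /\ Fib _ _ p /\ W _ _ p /\ comp p i = f
}.
Arguments W {C} m {X Y}.
Arguments Cof {C} m {X Y}.
Arguments Fib {C} m {X Y}.

Definition injective_model (C : Category) (MS : ModelStructure C) : Prop :=
  forall (X Y : C) (f : hom X Y), Cof MS f <-> mono f.

Record Comonad (C : Category) := {
  Kf :> Functor C C;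
  eps : forall X : C, hom (Kf X) X;
  del : forall X : C, hom (Kf X) (Kf (Kf X));
  eps_nat : forall X Y (f : hom X Y), comp f (eps X) = comp (eps Y) (fmap Kf f);
  del_nat : forall X Y (f : hom X Y),
      comp (fmap Kf (fmap Kf f)) (del X) = comp (del Y) (fmap Kf f);
  counit_l : forall X, comp (eps (Kf X)) (del X) = idm (Kf X);
  counit_r : forall X, comp (fmap Kf (eps X)) (del X) = idm (Kf X);
  coassoc : forall X,
      comp (fmap Kf (del X)) (del X) = comp (del (Kf X)) (del X)
}.
Arguments eps {C} k X : rename.
Arguments del {C} k X : rename.

Definition preserves_monos (C : Category) (F : Functor C C) : Prop :=
  forall (X Y : C) (f : hom X Y), mono f -> mono (fmap F f).

Section Coalgebras.
Variables (C : Category) (KK : Comonad C).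

Record Coalg := {
  cob : ob C;
  cstr : hom cob (KK cob);
  cstr_coassoc : comp (fmap KK cstr) cstr = comp (del KK cob) cstr;
  cstr_counit : comp (eps KK cob) cstr = idm cob
}.

Definition coalg_hom (A B : Coalg) : Type :=
  { f : hom (cob A) (cob B) | comp (cstr B) f = comp (fmap KK f) (cstr A) }.

Lemma coalg_id_prop (A : Coalg) :
  comp (cstr A) (idm (cob A)) = comp (fmap KK (idm (cob A))) (cstr A).
Proof. rewrite fmap_id, comp_idl, comp_idr. reflexivity. Qed.

Definition coalg_id (A : Coalg) : coalg_hom A A :=
  exist _ (idm (cob A)) (coalg_id_prop A).

Lemma coalg_comp_prop (A B D : Coalg) (g : coalg_hom B D) (f : coalg_hom A B) :
  comp (cstr D) (comp (proj1_sig g) (proj1_sig f))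
  = comp (fmap KK (comp (proj1_sig g) (proj1_sig f))) (cstr A).
Proof.
  destruct g as [g Hg], f as [f Hf]; simpl.
  rewrite comp_assoc, Hg, <- comp_assoc, Hf, comp_assoc, fmap_comp.
  reflexivity.
Qed.

Definition coalg_comp (A B D : Coalg) (g : coalg_hom B D) (f : coalg_hom A B)
  : coalg_hom A D :=
  exist _ (comp (proj1_sig g) (proj1_sig f)) (coalg_comp_prop g f).

Definition CoalgCat : Category.
Proof.
  refine {| ob := Coalg; hom := coalg_hom; idm := coalg_id;
            comp := coalg_comp |}.
  - intros X Y [f Hf]; apply subset_eq_compat; simpl; apply comp_idl.
  - intros X Y [f Hf]; apply subset_eq_compat; simpl; apply comp_idr.
  - intros X Y Z V [h Hh] [g Hg] [f Hf]; apply subset_eq_compat; simpl;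
      apply comp_assoc.
Defined.

Definition U_K {A B : Coalg} (f : coalg_hom A B) : hom (cob A) (cob B) :=
  proj1_sig f.

Definition F_K (X : C) : Coalg :=
  {| cob := KK X; cstr := del KK X;
     cstr_coassoc := coassoc KK X; cstr_counit := counit_l KK X |}.

End Coalgebras.

Arguments cob {C KK}.
Arguments cstr {C KK}.
Arguments U_K {C KK A B}.
Arguments F_K {C} KK X.

Section KConditions.
Variables (C : Category) (MS : ModelStructure C) (KK : Comonad C).

Definition K0 : Prop := complete (CoalgCat KK).

Definition K1 : Prop := forall D : Coalg KK, Cof MS (cstr D).

Definition K2 : Prop :=
  forall (X Y : C) (f : hom X Y), Cof MS f -> Cof MS (fmap KK f).

(** (K3): for i : (C,γ) -> F_K X with U_K i a cofibration and any
    g : (C,γ) -> (D,δ), the induced morphism (i,g) into a product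
    F_K X × (D,δ) in M_K (whenever such a product exists) is, after
    forgetting, a cofibration. *)
Definition K3 : Prop :=
  forall (X : C) (Cg Dd : Coalg KK)
         (i : coalg_hom Cg (F_K KK X)) (g : coalg_hom Cg Dd),
    Cof MS (U_K i) ->
    forall (P : Coalg KK) (p1 : coalg_hom P (F_K KK X))
           (p2 : coalg_hom P Dd),
      is_product (C := CoalgCat KK) (F_K KK X) Dd P p1 p2 ->
      forall h : coalg_hom Cg P,
        comp (C := CoalgCat KK) p1 h = i ->
        comp (C := CoalgCat KK) p2 h = g ->
        Cof MS (U_K h).

End KConditions.

(* Main.v *)
Require Import Defs.
From Stdlib Require Import ProofIrrelevance ClassicalEpsilon.

Section Sink.
Variable A : Set.
Definition sk_hom (x y : option A) : Set :=
  match x, y with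
  | None, None => unit | Some _, None => unit | None, Some _ => Empty_set
  | Some a, Some b => {_ : unit | a = b} end.
Definition sk_id (x : option A) : sk_hom x x :=
  match x as x0 return sk_hom x0 x0 with
  | None => tt | Some a => exist _ tt eq_refl end.
Definition sk_comp (x y z : option A) : sk_hom y z -> sk_hom x y -> sk_hom x z :=
 match x as x0, y as y0, z as z0
   return sk_hom y0 z0 -> sk_hom x0 y0 -> sk_hom x0 z0 with
 | None, None, None => fun _ _ => tt
 | None, None, Some _ => fun g _ => g
 | None, Some _, _ => fun _ f => match f with end
 | Some _, None, None => fun _ _ => tt
 | Some _, None, Some _ => fun g _ => match g with end
 | Some _, Some _, None => fun _ _ => tt
 | Some _, Some _, Some _ => fun g f =>
     exist _ tt (eq_trans (proj2_sig f) (proj2_sig g))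
 end.

Ltac skcl := repeat match goal with
  | o : option A |- _ => destruct o
  end; simpl in *; repeat match goal with
  | u : unit |- _ => destruct u
  | e : Empty_set |- _ => destruct e
  | s : {_ : unit | _} |- _ => destruct s as [[] ?]
  end; simpl in *; try reflexivity;
  repeat match goal with | e : Empty_set |- _ => destruct e end;
  try (f_equal; apply proof_irrelevance).

Definition skCat : SmallCat.
Proof.
  refine {| sob := option A; shom := sk_hom; sidm := sk_id; scomp := sk_comp |};
  intros; skcl.
Defined.

Variables (C : Category) (Z : C) (X : A -> C) (f : forall a, hom (X a) Z).
Definition sk_ob (o : option A) : C := match o with None => Z | Some a => X a end.
Definition sk_fmap (x y : option A) : sk_hom x y -> hom (sk_ob x) (sk_ob y) :=
 match x as x0, y as y0 return sk_hom x0 y0 -> hom (sk_ob x0) (sk_ob y0) with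
 | None, None => fun _ => idm Z
 | Some a, None => fun _ => f a
 | None, Some _ => fun u => match u with end
 | Some a, Some b => fun u =>
     match proj2_sig u in _ = b' return hom (X a) (X b') with eq_refl => idm (X a) end
 end.

Definition skF : Functor (SmallCat_cat skCat) C.
Proof.
  refine (@Build_Functor (SmallCat_cat skCat) C (sk_ob : ob (SmallCat_cat skCat) -> ob C) sk_fmap _ _).
  - intros [x|]; reflexivity.
  - intros x y z g h. destruct x as [x|], y as [y|], z as [z|]; simpl in *;
    repeat match goal with
    | u : unit |- _ => destruct u
    | e : Empty_set |- _ => destruct e
    | s : {_ : unit | _} |- _ => destruct s as [[] ?]
    end; simpl; subst; simpl;
    rewrite ?comp_idl, ?comp_idr; reflexivity.
Defined.

Lemma sink_lim (HC : complete C) :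
  {P : C & {pa : forall a, hom P (X a) & {p0 : hom P Z |
    (forall a, comp (f a) (pa a) = p0) /\
    (forall Q (q : forall a, hom Q (X a)) q0, (forall a, comp (f a) (q a) = q0) ->
       exists h, (forall a, comp (pa a) h = q a) /\ comp p0 h = q0) /\
    (forall Q (h h' : hom Q P), (forall a, comp (pa a) h = comp (pa a) h') ->
       comp p0 h = comp p0 h' -> h = h')}}}.
Proof.
  destruct (constructive_indefinite_description _ (HC skCat skF)) as [P HP].
  destruct (constructive_indefinite_description _ HP) as [l [Hc Hu]].
  exists P, (fun a => l (Some a)), (l None).
  split; [|split].
  - intros a. exact (Hc (Some a) None tt).
  - intros Q q q0 Hq.
    destruct (Hu Q (fun o => match o as o0 return hom Q (sk_ob o0) with
                     None => q0 | Some a => q a end)) as [h [Hh _]].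
    + intros [j|] [k|] u; simpl in *; skcl; subst; simpl;
        rewrite ?comp_idl; auto.
    + exists h; split; [intro a; exact (Hh (Some a)) | exact (Hh None)].
  - intros Q h h' E1 E0.
    destruct (Hu Q (fun o => comp (l o) h)) as [g [_ Hg]].
    + intros j k u. rewrite comp_assoc. f_equal. apply Hc.
    + rewrite (Hg h) by reflexivity. symmetry. apply Hg.
      intros [j|]; simpl; auto.
Qed.
End Sink.

Local Notation "g ∘ f" := (comp g f) (at level 40, left associativity).

Lemma split_mono (C : Category) (X Y : C) (s : hom X Y) (r : hom Y X) :
  r ∘ s = idm X -> mono s.
Proof.
  intros H W g h E. rewrite <- (comp_idl _ _ _ g), <- (comp_idl _ _ _ h), <- H,
    <- !comp_assoc, E. reflexivity.
Qed.

Lemma coalg_hom_eq (C : Category) (KK : Comonad C) (A B : Coalg KK)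
  (f g : coalg_hom A B) : proj1_sig f = proj1_sig g -> f = g.
Proof. destruct f, g; simpl; intros ->; f_equal; apply proof_irrelevance. Qed.

Section K0proof.
Variables (M : Category) (KK : Comonad M).
Hypotheses (HC : complete M) (HW : well_powered M) (HK : preserves_monos KK).
Variables (J : SmallCat) (D : Functor (SmallCat_cat J) (CoalgCat KK)).

Definition UD : Functor (SmallCat_cat J) M.
Proof.
  refine (@Build_Functor (SmallCat_cat J) M (fun j => cob (D j))
     (fun j k u => proj1_sig (fmap D u)) _ _).
  - intros j. exact (f_equal (@proj1_sig _ _) (fmap_id D j)).
  - intros. exact (f_equal (@proj1_sig _ _) (fmap_comp D _ _ _ g f)).
Defined.

Variables (L : M) (l : forall j, hom L (cob (D j))) (Hl : is_limit UD L l).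

Definition gj j := fmap KK (l j ∘ eps KK L) ∘ del KK L.
Definition eqcj j S (m : hom S (KK L)) :=
  cstr (D j) ∘ (l j ∘ (eps KK L ∘ m)) = gj j ∘ m.
Definition eqc S (m : hom S (KK L)) := forall j, eqcj j S m.

Lemma Pj_ex j : {P : M & {y : hom P (KK L) | mono y /\ eqcj j P y /\
   forall S m, eqcj j S m -> exists h, y ∘ h = m}}.
Proof.
  pose (F := fun b : bool => if b then cob (D j) else KK L).
  pose (g := fun b : bool => if b as b0 return hom (F b0) (KK (cob (D j)))
             then cstr (D j) else gj j).
  destruct (sink_lim bool M (KK (cob (D j))) F g HC) as [P [pa [p0 [Hc [Hex Hu]]]]].
  assert (Hc1 : cstr (D j) ∘ (pa true : hom P (cob (D j))) = p0) by exact (Hc true).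
  assert (Hc0 : gj j ∘ (pa false : hom P (KK L)) = p0) by exact (Hc false).
  assert (Hu' : forall Q (h h' : hom Q P), (pa true : hom P (cob (D j))) ∘ h = pa true ∘ h' ->
     (pa false : hom P (KK L)) ∘ h = pa false ∘ h' -> h = h').
  { intros Q h h' E1 E2. apply Hu. intros [|]; assumption.
    rewrite <- Hc0, <- !comp_assoc, E2. reflexivity. }
  set (pt := (pa true : hom P (cob (D j)))) in *.
  set (pf := (pa false : hom P (KK L))) in *.
  assert (Ht : pt = l j ∘ (eps KK L ∘ pf)).
  { rewrite <- (comp_idl _ _ _ pt), <- (cstr_counit (D j)).
    rewrite <- comp_assoc, Hc1, <- Hc0.
    unfold gj. rewrite !comp_assoc, <- (eps_nat KK). rewrite <- !comp_assoc, (comp_assoc _ _ _ _ _ (eps KK (KK L))).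
    rewrite (counit_l KK), comp_idl. reflexivity. }
  exists P, pf. split; [|split].
  - intros W h h' E. apply Hu'; [|exact E].
    apply (split_mono _ _ _ _ _ (cstr_counit (D j))).
    rewrite !comp_assoc, Hc1. transitivity (p0 ∘ h'). 2: { rewrite <- Hc1. reflexivity. }
    rewrite <- Hc0, <- !comp_assoc, E. reflexivity.
  - unfold eqcj. rewrite <- Ht. exact (eq_trans Hc1 (eq_sym Hc0)).
  - intros S m Hm.
    destruct (Hex S (fun b => if b as b0 return hom S (F b0) then l j ∘ (eps KK L ∘ m) else m)
               (gj j ∘ m)) as [h [Hh _]].
    + intros [|]; [exact Hm | reflexivity].
    + exists h. exact (Hh false).
Qed.


Lemma eqcj_pre j S T (m : hom S (KK L)) (h : hom T S) :
  eqcj j S m -> eqcj j T (m ∘ h).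
Proof. unfold eqcj. intros H. rewrite !comp_assoc in *. rewrite H. reflexivity. Qed.

Lemma eqc_pre S T (m : hom S (KK L)) (h : hom T S) : eqc S m -> eqc T (m ∘ h).
Proof. intros H j. apply eqcj_pre, H. Qed.

Lemma mono_comp (X Y Z : M) (f : hom X Y) (g : hom Y Z) : mono f -> mono g -> mono (g ∘ f).
Proof.
  intros Hf Hg W a b E. apply Hf, Hg. rewrite !comp_assoc. exact E.
Qed.

Lemma E_ex : {E : M & {e0 : hom E (KK L) | mono e0 /\ eqc E e0 /\
   forall S m, eqc S m -> exists h, e0 ∘ h = m}}.
Proof.
  pose (PP := fun j => Pj_ex j).
  destruct (sink_lim (sob J) M (KK L) (fun j => projT1 (PP j))
     (fun j => proj1_sig (projT2 (PP j))) HC) as [E [pa [p0 [Hc [Hex Hu]]]]].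
  exists E, p0. split; [|split].
  - intros W h h' Eq. apply Hu; [|exact Eq].
    intros a. destruct (proj2_sig (projT2 (PP a))) as [Hm _]. apply Hm.
    rewrite !comp_assoc, Hc. exact Eq.
  - intros j. rewrite <- (Hc j). apply eqcj_pre.
    destruct (proj2_sig (projT2 (PP j))) as [_ [H _]]. exact H.
  - intros S m Hm.
    assert (q : forall j, {h : hom S (projT1 (PP j)) | proj1_sig (projT2 (PP j)) ∘ h = m}).
    { intros j. apply constructive_indefinite_description.
      destruct (proj2_sig (projT2 (PP j))) as [_ [_ H]]. apply H, Hm. }
    destruct (Hex S (fun j => proj1_sig (q j)) m) as [h [_ Hh]].
    + intros j. exact (proj2_sig (q j)).
    + exists h. exact Hh.
Qed.

Definition good S (m : hom S (KK L)) := exists σ : hom S (KK S),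
  fmap KK σ ∘ σ = del KK S ∘ σ /\ eps KK S ∘ σ = idm S /\
  fmap KK m ∘ σ = del KK L ∘ m /\ eqc S m.

Variables (I : Set) (Sb : I -> M) (mk : forall i, hom (Sb i) (KK L))
  (Hmk : forall i, mono (mk i))
  (Hsub : forall Y (f : hom Y (KK L)), mono f -> exists i (u : hom Y (Sb i)), iso u /\ mk i ∘ u = f).

Definition Up i := forall S m, good S m -> exists u, mk i ∘ u = m.

Lemma T_ex : {T : M & {mT : hom T (KK L) | mono mT /\
   (forall S m, good S m -> exists h, mT ∘ h = m) /\
   (forall i, Up i -> exists t, mk i ∘ t = mT)}}.
Proof.
  destruct (sink_lim {i : I | Up i} M (KK L) (fun a => Sb (proj1_sig a))
     (fun a => mk (proj1_sig a)) HC) as [T [pa [p0 [Hc [Hex Hu]]]]].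
  exists T, p0. split; [|split].
  - intros W h h' Eq. apply Hu; [|exact Eq].
    intros a. apply (Hmk (proj1_sig a)). rewrite !comp_assoc, Hc. exact Eq.
  - intros S m Hg.
    destruct (Hex S (fun a => proj1_sig (constructive_indefinite_description _
                 (proj2_sig a S m Hg))) m) as [h [_ Hh]].
    + intros a. exact (proj2_sig (constructive_indefinite_description _ (proj2_sig a S m Hg))).
    + exists h. exact Hh.
  - intros i Hi. exists (pa (exist _ i Hi)). exact (Hc (exist _ i Hi)).
Qed.

Section WithT.
Variables (T : M) (mT : hom T (KK L)) (HmT : mono mT)
  (Hfac : forall S m, good S m -> exists h, mT ∘ h = m)
  (Hup : forall i, Up i -> exists t, mk i ∘ t = mT).

Lemma T_eqc : eqc T mT.
Proof.
  destruct E_ex as [E [e0 [He0 [HeE Heu]]]].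
  destruct (Hsub E e0 He0) as [i [u [[g [Hg1 Hg2]] Hu]]].
  destruct (Hup i) as [t Ht].
  - intros S m [σ [_ [_ [_ Hm]]]]. destruct (Heu S m Hm) as [h Hh].
    exists (u ∘ h). rewrite comp_assoc, Hu. exact Hh.
  - assert (Hmk' : mk i = e0 ∘ g).
    { rewrite <- Hu, <- comp_assoc, Hg2, comp_idr. reflexivity. }
    rewrite <- Ht, Hmk', <- comp_assoc. apply eqc_pre, HeE.
Qed.


Lemma T_sigma : exists σ : hom T (KK T), fmap KK mT ∘ σ = del KK L ∘ mT.
Proof.
  pose (F := fun b : bool => if b then T else KK T).
  pose (g := fun b : bool => if b as b0 return hom (F b0) (KK (KK L))
             then del KK L ∘ mT else fmap KK mT).
  destruct (sink_lim bool M (KK (KK L)) F g HC) as [V [pa [p0 [Hc [Hex Hu]]]]].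
  assert (Hc1 : del KK L ∘ mT ∘ (pa true : hom V T) = p0) by exact (Hc true).
  assert (Hc0 : fmap KK mT ∘ (pa false : hom V (KK T)) = p0) by exact (Hc false).
  set (vt := (pa true : hom V T)) in *.
  set (vk := (pa false : hom V (KK T))) in *.
  assert (HKm : mono (fmap KK mT)) by (apply HK, HmT).
  assert (Hvt : mono vt).
  { intros W h h' Eq. apply Hu.
    - intros [|]; [exact Eq|]. change (vk ∘ h = vk ∘ h'). apply HKm.
      rewrite !comp_assoc, Hc0. transitivity (p0 ∘ h'). 2: { rewrite <- Hc0. reflexivity. }
      rewrite <- Hc1, <- !comp_assoc, Eq. reflexivity.
    - rewrite <- Hc1, <- !comp_assoc, Eq. reflexivity. }
  assert (HmV : mono (mT ∘ vt)) by (apply mono_comp; assumption).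
  destruct (Hsub V (mT ∘ vt) HmV) as [i [u [[g' [Hg1 Hg2]] Hu']]].
  destruct (Hup i) as [t Ht].
  - intros S m Hg. destruct (Hfac S m Hg) as [h Hh].
    destruct Hg as [σ [_ [_ [Hσ _]]]].
    destruct (Hex S (fun b => if b as b0 return hom S (F b0) then h else fmap KK h ∘ σ)
                (del KK L ∘ m)) as [w [Hw _]].
    + intros [|]; simpl.
      * rewrite <- Hh, comp_assoc. reflexivity.
      * rewrite comp_assoc, <- fmap_comp, Hh. exact Hσ.
    + exists (u ∘ w). rewrite comp_assoc, Hu', <- comp_assoc.
      assert (Hw1 : vt ∘ w = h) by exact (Hw true). rewrite Hw1. exact Hh.
  - assert (Hr : vt ∘ (g' ∘ t) = idm T).
    { apply HmT. rewrite comp_idr, comp_assoc, <- Hu', <- Ht, !comp_assoc.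
      rewrite <- (comp_assoc _ _ _ _ _ (mk i)), Hg2, comp_idr. reflexivity. }
    exists (vk ∘ (g' ∘ t)). rewrite comp_assoc, Hc0, <- Hc1, <- comp_assoc, Hr, comp_idr.
    reflexivity.
Qed.

Lemma T_laws (σ : hom T (KK T)) : fmap KK mT ∘ σ = del KK L ∘ mT ->
  fmap KK σ ∘ σ = del KK T ∘ σ /\ eps KK T ∘ σ = idm T.
Proof.
  intros Hσ. split.
  - apply (HK _ _ _ (HK _ _ _ HmT)).
    rewrite comp_assoc, <- fmap_comp, Hσ, fmap_comp, <- comp_assoc, Hσ.
    rewrite (comp_assoc _ _ _ _ _ (fmap KK (fmap KK mT))), (del_nat KK), <- comp_assoc, Hσ, !comp_assoc, (coassoc KK).
    reflexivity.
  - apply HmT. rewrite comp_assoc, (eps_nat KK), <- comp_assoc, Hσ, comp_assoc.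
    rewrite (counit_l KK), comp_idl, comp_idr. reflexivity.
Qed.


Lemma cofree_eq (A : Coalg KK) (Y : M) (g : hom (cob A) (KK Y)) :
  del KK Y ∘ g = fmap KK g ∘ cstr A -> g = fmap KK (eps KK Y ∘ g) ∘ cstr A.
Proof.
  intros H. rewrite fmap_comp, <- comp_assoc, <- H, comp_assoc, (counit_r KK), comp_idl.
  reflexivity.
Qed.

Lemma T_limit : exists (L' : CoalgCat KK) (l' : forall j, hom L' (D j)), is_limit D L' l'.
Proof.
  destruct T_sigma as [σ Hσ].
  destruct (T_laws σ Hσ) as [H1 H2].
  pose (Tc := {| cob := T; cstr := σ; cstr_coassoc := H1; cstr_counit := H2 |} : Coalg KK).
  assert (Heq := T_eqc).
  assert (Hlam : forall j, cstr (D j) ∘ (l j ∘ (eps KK L ∘ mT)) =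
                 fmap KK (l j ∘ (eps KK L ∘ mT)) ∘ cstr Tc).
  { intros j. rewrite (Heq j). unfold gj. simpl.
    rewrite <- comp_assoc, <- Hσ, comp_assoc, <- fmap_comp, comp_assoc. reflexivity. }
  pose (lam := fun j => exist _ (l j ∘ (eps KK L ∘ mT)) (Hlam j) : coalg_hom Tc (D j)).
  destruct Hl as [Hlc Hlu].
  assert (Hcone : forall j k (u : shom J j k), proj1_sig (fmap D u) ∘ l j = l k) by exact Hlc.
  exists Tc, lam. split.
  - intros j k u. apply coalg_hom_eq. simpl. rewrite comp_assoc, Hcone. reflexivity.
  - intros M' m' Hm'.
    assert (Hc' : is_cone UD (cob M') (fun j => proj1_sig (m' j))).
    { intros j k u. exact (f_equal (@proj1_sig _ _) (Hm' j k u)). }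
    destruct (Hlu _ _ Hc') as [a [Ha Hau]].
    assert (Ha' : forall j, l j ∘ a = proj1_sig (m' j)) by exact Ha.
    assert (HmA : fmap KK (fmap KK a ∘ cstr M') ∘ cstr M' = del KK L ∘ (fmap KK a ∘ cstr M')).
    { rewrite fmap_comp, <- comp_assoc, (cstr_coassoc M'), !comp_assoc, (del_nat KK).
      reflexivity. }
    assert (HeA : forall j, l j ∘ (eps KK L ∘ (fmap KK a ∘ cstr M')) = proj1_sig (m' j)).
    { intros j. rewrite (comp_assoc _ _ _ _ _ (eps KK L)), <- (eps_nat KK), <- !comp_assoc, (cstr_counit M'),
        comp_idr. apply Ha'. }
    assert (Hg : good (cob M') (fmap KK a ∘ cstr M')).
    { exists (cstr M'). split; [exact (cstr_coassoc M')|]. split; [exact (cstr_counit M')|].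
      split; [exact HmA|].
      intros j. unfold eqcj. rewrite HeA, (proj2_sig (m' j)). unfold gj.
      rewrite <- comp_assoc, <- HmA, comp_assoc, <- fmap_comp, <- comp_assoc, HeA.
      reflexivity. }
    destruct (Hfac _ _ Hg) as [hT HhT].
    assert (HhTc : cstr Tc ∘ hT = fmap KK hT ∘ cstr M').
    { apply (HK _ _ _ HmT). simpl. rewrite comp_assoc, Hσ, <- comp_assoc, HhT, <- HmA,
        comp_assoc, <- fmap_comp, HhT. reflexivity. }
    exists (exist _ hT HhTc : coalg_hom M' Tc). split.
    + intros j. apply coalg_hom_eq. simpl. rewrite <- !comp_assoc, HhT. apply HeA.
    + intros h' Hh'. apply coalg_hom_eq. simpl.
      destruct h' as [h0 Hh0]. simpl.
      assert (Hj : forall j, l j ∘ (eps KK L ∘ (mT ∘ h0)) = proj1_sig (m' j)).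
      { intros j. rewrite <- (f_equal (@proj1_sig _ _) (Hh' j)). simpl.
        rewrite !comp_assoc. reflexivity. }
      assert (Ha0 : eps KK L ∘ (mT ∘ h0) = a) by (apply Hau; exact Hj).
      apply HmT. rewrite HhT.
      rewrite (cofree_eq M' L (mT ∘ h0)), Ha0; [reflexivity|].
      rewrite comp_assoc, <- Hσ, <- comp_assoc.
      assert (Hh0' : σ ∘ h0 = fmap KK h0 ∘ cstr M') by exact Hh0. rewrite Hh0', comp_assoc, <- fmap_comp. reflexivity.
Qed.

End WithT.
End K0proof.

Lemma K0_of (M : Category) (KK : Comonad M) :
  complete M -> well_powered M -> preserves_monos KK -> K0 KK.
Proof.
  intros HC HW HK J D.
  destruct (HC J (UD M KK J D)) as [L [l Hl]].
  destruct (HW (KK L)) as [I [Sb [mk [Hmk Hsub]]]].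
  destruct (T_ex M KK HC J D L l I Sb mk Hmk) as [T [mT [HmT [Hfac Hup]]]].
  exact (T_limit M KK HC HK J D L l Hl I Sb mk Hsub T mT HmT Hfac Hup).
Qed.

Theorem lemma5p3 (M : Category) (MS : ModelStructure M) (KK : Comonad M) :
  well_powered M ->
  injective_model MS ->
  ((K0 KK /\ K1 MS KK /\ K2 MS KK /\ K3 MS KK) <-> preserves_monos KK).
Proof.
  intros HW Hinj. split.
  - intros [_ [_ [HK2 _]]] X Y f Hf. apply Hinj, HK2, Hinj, Hf.
  - intros HK. split; [|split; [|split]].
    + apply K0_of; [exact (ms_complete MS)|exact HW|exact HK].
    + intros Dc. apply Hinj. exact (split_mono _ _ _ _ _ (cstr_counit Dc)).
    + intros X Y f Hf. apply Hinj, HK, Hinj, Hf.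
    + intros X Cg Dd i g Hi P p1 p2 _ h Hh1 _. apply Hinj.
      apply Hinj in Hi. intros W a b E. apply Hi.
      unfold U_K in *. rewrite <- Hh1. simpl. rewrite <- !comp_assoc, E. reflexivity.
Qed.
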